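(* Let $n\ge3$, $t_1<\dots<t_n$, and for $j=1,\dots,n-1$ let $\xi_j\in\mathbb{R}$ and $\varphi_j=\Phi_{(\xi_j,-\xi_j)}$. Let $H_1,\dots,H_n$ be the associated generalized hat functions and $\mathcal{H}_n$ their span. Then the matrix $(s_{i,j})$ with $s_{i,j}=\int_{t_1}^{t_n}H_i(t)H_j(t)\,dt$ is row diagonally dominant, and the orthogonal projection $P^{\mathcal{H}_n}$ (for the unweighted $L^2$ inner product on $[t_1,t_n]$) satisfies $\|P^{\mathcal{H}_n}\|_{op}\le4$.
   Context: $\Phi_{(\xi,-\xi)}(t)=\frac{\sinh(\xi t)}{\xi}$ for $\xi\ne0$ and $\Phi_{(0,0)}(t)=t$. Generalized hat functions: for $2\le j\le n-1$, $H_j(t)=\frac{\varphi_{j-1}(t-t_{j-1})}{\varphi_{j-1}(t_j-t_{j-1})}$ on $[t_{j-1},t_j]$, $H_j(t)=\frac{\varphi_j(t-t_{j+1})}{\varphi_j(t_j-t_{j+1})}$ on $[t_j,t_{j+1}]$, $0$ elsewhere; $H_1=\frac{\varphi_1(t-t_2)}{\varphi_1(t_1-t_2)}$ on $[t_1,t_2]$, $0$ elsewhere; $H_n=\frac{\varphi_{n-1}(t-t_{n-1})}{\varphi_{n-1}(t_n-t_{n-1})}$ on $[t_{n-1},t_n]$, $0$ elsewhere. $\|P^{\mathcal{H}_n}\|_{op}=\sup_{f\ne0}\|P^{\mathcal{H}_n}f\|_\infty/\|f\|_\infty$ on $C[t_1,t_n]$. Row diagonally dominant: there is $c\in(0,1)$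 with $|s_{j-1,j}|+|s_{j,j+1}|\le c|s_{j,j}|$ for all $j$, where $s_{0,1}=s_{n,n+1}=0$. *)

(* Defs.v *)
From Stdlib Require Import Reals.
From Coquelicot Require Import Coquelicot.
Open Scope R_scope.

Definition Phi (xi x : R) : R :=
  if Req_EM_T xi 0 then x else sinh (xi * x) / xi.

(* Knots t_1 < ... < t_n (1-based, t : nat -> R), parameters xi_1..xi_{n-1},
   varphi_j = Phi (xi j).  Generalized hat function H_j, 1 <= j <= n. *)
Definition hat (n : nat) (t xi : nat -> R) (j : nat) (x : R) : R :=
  if (andb (Nat.leb 2 j) (andb ((if Rle_dec (t (j - 1)%nat) x then true else false)) ((if Rle_dec x (t j) then true else false))))
  then Phi (xi (j - 1)%nat) (x - t (j - 1)%nat) / Phi (xi (j - 1)%nat) (t j - t (j - 1)%nat)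
  else if (andb (Nat.leb (S j) n) (andb ((if Rle_dec (t j) x then true else false)) ((if Rle_dec x (t (S j)) then true else false))))
  then Phi (xi j) (x - t (S j)) / Phi (xi j) (t j - t (S j))
  else 0.

Definition gram (n : nat) (t xi : nat -> R) (i j : nat) : R :=
  RInt (fun x => hat n t xi i x * hat n t xi j x) (t 1%nat) (t n).

(* Row diagonal dominance with the convention s_{0,1} = s_{n,n+1} = 0. *)
Definition row_diag_dominant (n : nat) (s : nat -> nat -> R) : Prop :=
  exists c : R, 0 < c < 1 /\
    forall j : nat, (1 <= j <= n)%nat ->
      (if Nat.eqb j 1 then 0 else Rabs (s (j - 1)%nat j))
      + (if Nat.eqb j n then 0 else Rabs (s j (S j)))
      <= c * Rabs (s j j).

Definition cont_on (a b : R) (f : R -> R) : Prop :=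
  forall x, a <= x <= b ->
    filterlim f (within (fun y => a <= y <= b) (locally x)) (locally (f x)).

(* g = P^{H_n} f : g lies in span{H_1..H_n} and f - g is L^2[t_1,t_n]-orthogonal
   to every H_i. *)
Definition is_hat_proj (n : nat) (t xi : nat -> R) (f g : R -> R) : Prop :=
  (exists a : nat -> R, forall x, g x = sum_n_m (fun i => a i * hat n t xi i x) 1 n)
  /\ forall i : nat, (1 <= i <= n)%nat ->
       RInt (fun x => (f x - g x) * hat n t xi i x) (t 1%nat) (t n) = 0.

(* Main.v *)
Require Import Defs.
From Stdlib Require Import Reals Lra Psatz Lia FunctionalExtensionality.
From Coquelicot Require Import Coquelicot.
Open Scope R_scope.

Lemma mono0 (F dF : R -> R) :
  (forall x, is_derive F x (dF x)) -> (forall x, 0 <= x -> 0 <= dF x) ->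
  forall y, 0 <= y -> F 0 <= F y.
Proof.
  intros HD Hp y Hy.
  destruct (Req_dec y 0) as [->|Hy0]; [lra|].
  destruct (MVT_gen F 0 y dF) as [c [Hc Heq]].
  - intros x _; apply HD.
  - intros x _. apply continuity_pt_filterlim. apply (ex_derive_continuous (K:=R_AbsRing) (V:=R_NormedModule)). eexists; apply HD.
  - rewrite Rmin_left in Hc by lra. rewrite Rmax_right in Hc by lra.
    assert (0 <= dF c) by (apply Hp; lra). nra.
Qed.

Lemma exp_neg_inv x : exp (- x) = / exp x.
Proof. apply exp_Ropp. Qed.

Lemma sinh_ge_id y : 0 <= y -> y <= sinh y.
Proof.
  intros Hy.
  assert (H := mono0 (fun y => sinh y - y) (fun y => cosh y - 1)).
  simpl in H. rewrite sinh_0 in H.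
  enough (0 - 0 <= sinh y - y) by lra.
  apply H; auto.
  - intros x. unfold sinh, cosh. auto_derive; auto. lra.
  - intros x _. unfold cosh. rewrite exp_neg_inv.
    assert (0 < exp x) by apply exp_pos.
    assert ((exp x + / exp x)/2 - 1 = (exp x - 1)^2 / (2 * exp x)) by (field; lra).
    rewrite H1. apply Rmult_le_pos; [apply pow2_ge_0|]. apply Rlt_le, Rinv_0_lt_compat; lra.
Qed.

Lemma sinh_nonneg y : 0 <= y -> 0 <= sinh y.
Proof. intros; pose proof (sinh_ge_id y H); lra. Qed.

Lemma cosh_gt1 y : 0 < y -> 1 < cosh y.
Proof.
  intros Hy. unfold cosh. rewrite exp_neg_inv.
  assert (1 < exp y). { pose proof (exp_ineq1 y). lra. }
  assert ((exp y + / exp y)/2 - 1 = (exp y - 1)^2 / (2 * exp y)) by (field; lra).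
  enough (0 < (exp y - 1)^2 / (2 * exp y)) by lra.
  apply Rdiv_lt_0_compat; nra.
Qed.

Lemma ycosh_ge y : 0 <= y -> sinh y <= y * cosh y.
Proof.
  intros Hy.
  assert (H := mono0 (fun y => y * cosh y - sinh y) (fun y => y * sinh y)).
  simpl in H. rewrite sinh_0 in H.
  enough (0 * cosh 0 - 0 <= y * cosh y - sinh y) by lra.
  apply H; auto.
  - intros x. unfold sinh, cosh. auto_derive; auto. field.
  - intros x Hx. apply Rmult_le_pos; auto. apply sinh_nonneg; auto.
Qed.

Lemma key3 y : 0 <= y -> y * (2 * cosh y + 1) <= sinh y * (cosh y + 2).
Proof.
  intros Hy.
  assert (H := mono0 (fun y => sinh y * (cosh y + 2) - y * (2 * cosh y + 1))
                     (fun y => 2 * sinh y * (sinh y - y))).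
  simpl in H. rewrite sinh_0 in H.
  enough (0 * (cosh 0 + 2) - 0 * (2 * cosh 0 + 1) <= sinh y * (cosh y + 2) - y * (2 * cosh y + 1)) by lra.
  apply H; auto.
  - intros x. unfold sinh, cosh. auto_derive; auto.
    rewrite !exp_neg_inv. assert (0 < exp x) by apply exp_pos. field. lra.
  - intros x Hx. pose proof (sinh_ge_id x Hx). pose proof (sinh_nonneg x Hx). nra.
Qed.

Lemma sinh_opp z : sinh (- z) = - sinh z.
Proof. unfold sinh. rewrite Ropp_involutive. field. Qed.

Lemma Phi_abs xi : Phi xi = Phi (Rabs xi).
Proof.
  apply functional_extensionality; intro z. unfold Phi.
  destruct (Req_EM_T xi 0) as [H|H]; destruct (Req_EM_T (Rabs xi) 0) as [H'|H'].
  - auto.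
  - subst. rewrite Rabs_R0 in H'. lra.
  - apply Rabs_eq_0 in H'. lra.
  - unfold Rabs. destruct (Rcase_abs xi).
    + replace (- xi * z) with (- (xi * z)) by ring. rewrite sinh_opp. field; auto.
    + auto.
Qed.

Lemma Phi_pos xi z : 0 <= xi -> sinh (xi * z) / xi = Phi xi z \/ xi = 0.
Proof. Abort.

Definition Uf xi a b x := Phi xi (x - a) / Phi xi (b - a).
Definition Vf xi a b x := Phi xi (x - b) / Phi xi (a - b).

Lemma RInt_anti (F f : R -> R) a b :
  (forall x, is_derive F x (f x)) -> (forall x, ex_derive f x) -> @eq R (RInt f a b) (F b - F a).
Proof.
  intros HF Hf. apply is_RInt_unique.
  apply (is_RInt_derive F f a b).
  - intros; apply HF.
  - intros; apply (ex_derive_continuous (K:=R_AbsRing) (V:=R_NormedModule)); apply Hf.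
Qed.

Lemma sinh_lin xi x a : sinh (xi * (x - a)) = (exp (xi*x) / exp (xi*a) - exp (xi*a) / exp (xi*x)) / 2.
Proof.
  unfold sinh. replace (xi * (x-a)) with (xi*x + - (xi*a)) by ring.
  replace (- (xi*x + - (xi*a))) with (xi*a + - (xi*x)) by ring.
  rewrite !exp_plus, !exp_Ropp. unfold Rdiv. reflexivity.
Qed.

Lemma exp_diff xi a b : exp (xi * (b - a)) = exp (xi*b) / exp (xi*a).
Proof. replace (xi*(b-a)) with (xi*b + - (xi*a)) by ring. rewrite exp_plus, exp_Ropp. reflexivity. Qed.

Lemma sinh_lin' xi x b : sinh (xi * (b - x)) = (exp (xi*b) / exp (xi*x) - exp (xi*x) / exp (xi*b)) / 2.
Proof. apply sinh_lin. Qed.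

Ltac pos := repeat (apply Rmult_lt_0_compat || apply Rinv_0_lt_compat || apply Rdiv_lt_0_compat || apply pow_lt); try lra; auto.
Ltac nz := repeat split; try match goal with |- _ <> 0 => apply Rgt_not_eq; pos end.

Section Int.
Variables xi a b : R.
Hypothesis Hxi : 0 < xi.

Let y := xi * (b - a).

Lemma sc_exp : sinh y = (exp (xi*b)/exp (xi*a) - exp (xi*a)/exp(xi*b))/2 /\
               cosh y = (exp (xi*b)/exp (xi*a) + exp (xi*a)/exp(xi*b))/2.
Proof.
  unfold y, cosh. split. apply sinh_lin.
  rewrite exp_diff. replace (- (xi*(b-a))) with (xi*(a-b)) by ring. rewrite exp_diff. reflexivity.
Qed.

Lemma int_pp : @eq R (RInt (fun x => sinh (xi*(x-a)) * sinh (xi*(x-a))) a b) ((sinh y * cosh y / xi - (b - a)) / 2).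
Proof.
  assert (Ha := exp_pos (xi*a)). assert (Hb := exp_pos (xi*b)).
  rewrite (RInt_ext _ (fun x => ((exp (xi*x) / exp (xi*a) - exp (xi*a) / exp (xi*x)) / 2) *
                                 ((exp (xi*x) / exp (xi*a) - exp (xi*a) / exp (xi*x)) / 2)))
    by (intros; rewrite sinh_lin; reflexivity).
  rewrite (RInt_anti (fun x => (exp (xi*x)^2/(2*xi*exp (xi*a)^2) - 2*x - exp (xi*a)^2/(2*xi*exp (xi*x)^2))/4)).
  - destruct sc_exp as [-> ->]. field. repeat split; lra.
  - intros x. assert (Hx := exp_pos (xi*x)). auto_derive. nz. field. nz.
  - intros x. assert (Hx := exp_pos (xi*x)). auto_derive. nz.
Qed.

Lemma int_qq : @eq R (RInt (fun x => sinh (xi*(b-x)) * sinh (xi*(b-x))) a b) ((sinh y * cosh y / xi - (b - a)) / 2).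
Proof.
  assert (Ha := exp_pos (xi*a)). assert (Hb := exp_pos (xi*b)).
  rewrite (RInt_ext _ (fun x => ((exp (xi*b) / exp (xi*x) - exp (xi*x) / exp (xi*b)) / 2) *
                                 ((exp (xi*b) / exp (xi*x) - exp (xi*x) / exp (xi*b)) / 2)))
    by (intros; rewrite sinh_lin; reflexivity).
  rewrite (RInt_anti (fun x => (- exp (xi*b)^2/(2*xi*exp (xi*x)^2) - 2*x + exp (xi*x)^2/(2*xi*exp (xi*b)^2))/4)).
  - destruct sc_exp as [-> ->]. field. repeat split; lra.
  - intros x. assert (Hx := exp_pos (xi*x)). auto_derive. nz. field. nz.
  - intros x. assert (Hx := exp_pos (xi*x)). auto_derive. nz.
Qed.

Lemma int_pq : @eq R (RInt (fun x => sinh (xi*(b-x)) * sinh (xi*(x-a))) a b) (((b - a) * cosh y - sinh y / xi) / 2).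
Proof.
  assert (Ha := exp_pos (xi*a)). assert (Hb := exp_pos (xi*b)).
  rewrite (RInt_ext _ (fun x => ((exp (xi*b) / exp (xi*x) - exp (xi*x) / exp (xi*b)) / 2) *
                                 ((exp (xi*x) / exp (xi*a) - exp (xi*a) / exp (xi*x)) / 2)))
    by (intros; rewrite !sinh_lin; reflexivity).
  rewrite (RInt_anti (fun x => ((exp (xi*b)/exp (xi*a) + exp (xi*a)/exp (xi*b)) * x
        - exp (xi*x)^2/(2*xi*exp (xi*a)*exp (xi*b)) + exp (xi*a)*exp (xi*b)/(2*xi*exp (xi*x)^2))/4)).
  - destruct sc_exp as [-> ->]. field. repeat split; lra.
  - intros x. assert (Hx := exp_pos (xi*x)). auto_derive. nz. field. nz.
  - intros x. assert (Hx := exp_pos (xi*x)). auto_derive. nz.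
Qed.

Lemma int_p : @eq R (RInt (fun x => sinh (xi*(x-a))) a b) ((cosh y - 1) / xi).
Proof.
  assert (Ha := exp_pos (xi*a)). assert (Hb := exp_pos (xi*b)).
  rewrite (RInt_ext _ (fun x => ((exp (xi*x) / exp (xi*a) - exp (xi*a) / exp (xi*x)) / 2)))
    by (intros; rewrite sinh_lin; reflexivity).
  rewrite (RInt_anti (fun x => (exp (xi*x)/(xi*exp (xi*a)) + exp (xi*a)/(xi*exp (xi*x)))/2)).
  - destruct sc_exp as [_ ->]. field. repeat split; lra.
  - intros x. assert (Hx := exp_pos (xi*x)). auto_derive. nz. field. nz.
  - intros x. assert (Hx := exp_pos (xi*x)). auto_derive. nz.
Qed.

Lemma int_q : @eq R (RInt (fun x => sinh (xi*(b-x))) a b) ((cosh y - 1) / xi).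
Proof.
  assert (Ha := exp_pos (xi*a)). assert (Hb := exp_pos (xi*b)).
  rewrite (RInt_ext _ (fun x => ((exp (xi*b) / exp (xi*x) - exp (xi*x) / exp (xi*b)) / 2)))
    by (intros; rewrite sinh_lin; reflexivity).
  rewrite (RInt_anti (fun x => (- exp (xi*b)/(xi*exp (xi*x)) - exp (xi*x)/(xi*exp (xi*b)))/2)).
  - destruct sc_exp as [_ ->]. field. repeat split; lra.
  - intros x. assert (Hx := exp_pos (xi*x)). auto_derive. nz. field. nz.
  - intros x. assert (Hx := exp_pos (xi*x)). auto_derive. nz.
Qed.
End Int.

Definition good (U V : R -> R) (a b : R) : Prop :=
 (forall x, a <= x <= b -> 0 <= U x /\ 0 <= V x /\ U x + V x <= 1) /\
 U a = 0 /\ U b = 1 /\ V a = 1 /\ V b = 0 /\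
 (forall x, continuous U x) /\ (forall x, continuous V x) /\
 0 < RInt (fun x => U x * U x) a b /\ 0 < RInt (fun x => V x * V x) a b /\
 0 <= RInt (fun x => V x * U x) a b /\
 2 * RInt (fun x => V x * U x) a b <= RInt (fun x => U x * U x) a b /\
 2 * RInt (fun x => V x * U x) a b <= RInt (fun x => V x * V x) a b /\
 RInt U a b <= 2 * RInt (fun x => U x * U x) a b /\
 RInt V a b <= 2 * RInt (fun x => V x * V x) a b.

Lemma cont_of_der (f : R -> R) x : (forall x, ex_derive f x) -> continuous f x.
Proof. intros H; apply (ex_derive_continuous (K:=R_AbsRing) (V:=R_NormedModule)); apply H. Qed.

Lemma RInt_scal_l (f : R -> R) c a b : (forall x, continuous f x) ->
  @eq R (RInt (fun x => c * f x) a b) (c * RInt f a b).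
Proof.
  intros H. apply (RInt_scal f a b c). apply ex_RInt_continuous. intros; apply H.
Qed.

Lemma RInt_ext_R (f g : R -> R) a b : (forall x, @eq R (f x) (g x)) -> @eq R (RInt f a b) (RInt g a b).
Proof. intros H. apply RInt_ext. intros; apply H. Qed.

Lemma div_le x z D : 0 < D -> x <= z -> x / D <= z / D.
Proof. intros. unfold Rdiv. apply Rmult_le_compat_r; auto. apply Rlt_le, Rinv_0_lt_compat; auto. Qed.

Lemma sinh_add p q : sinh (p + q) = sinh p * cosh q + cosh p * sinh q.
Proof.
  unfold sinh, cosh. rewrite Ropp_plus_distr, !exp_plus. field.
Qed.

Lemma cosh_ge1 z : 0 <= z -> 1 <= cosh z.
Proof.
  intros H. destruct (Req_dec z 0) as [->|H0]. rewrite cosh_0; lra.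
  apply Rlt_le, cosh_gt1; lra.
Qed.

Lemma good_pos xi a b : 0 < xi -> a < b ->
  good (fun x => sinh (xi*(x-a)) / sinh (xi*(b-a))) (fun x => sinh (xi*(b-x)) / sinh (xi*(b-a))) a b.
Proof.
  intros Hxi Hab.
  set (y := xi*(b-a)). assert (Hy : 0 < y) by (unfold y; nra).
  set (K := sinh y). set (c := cosh y).
  assert (HK : y <= K) by (apply sinh_ge_id; lra).
  assert (Hc : 1 < c) by (apply cosh_gt1; lra).
  assert (HB : K <= y * c) by (apply ycosh_ge; lra).
  assert (H3 : y * (2 * c + 1) <= K * (c + 2)) by (apply key3; lra).
  assert (Hh : b - a = y / xi) by (unfold y; field; lra).
  assert (Hder : forall g : R -> R, (forall x, ex_derive g x) -> forall x, continuous g x)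
    by (intros; apply cont_of_der; auto).
  assert (CU : forall x, continuous (fun x => sinh (xi*(x-a))) x)
    by (apply Hder; intros; unfold sinh; auto_derive; auto).
  assert (CV : forall x, continuous (fun x => sinh (xi*(b-x))) x)
    by (apply Hder; intros; unfold sinh; auto_derive; auto).
  assert (CUU : forall x, continuous (fun x => sinh (xi*(x-a)) * sinh (xi*(x-a))) x)
    by (apply Hder; intros; unfold sinh; auto_derive; auto).
  assert (CVV : forall x, continuous (fun x => sinh (xi*(b-x)) * sinh (xi*(b-x))) x)
    by (apply Hder; intros; unfold sinh; auto_derive; auto).
  assert (CVU : forall x, continuous (fun x => sinh (xi*(b-x)) * sinh (xi*(x-a))) x)
    by (apply Hder; intros; unfold sinh; auto_derive; auto).
  assert (EUU : @eq R (RInt (fun x => sinh (xi*(x-a)) / K * (sinh (xi*(x-a)) / K)) a b) ((K * c - y) / (2 * xi * K^2))).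
  { rewrite (RInt_ext_R _ (fun x => / K^2 * (sinh (xi*(x-a)) * sinh (xi*(x-a))))) by (intros; field; lra).
    rewrite RInt_scal_l by auto. rewrite int_pp by auto. fold y K c. rewrite Hh. field. split; lra. }
  assert (EVV : @eq R (RInt (fun x => sinh (xi*(b-x)) / K * (sinh (xi*(b-x)) / K)) a b) ((K * c - y) / (2 * xi * K^2))).
  { rewrite (RInt_ext_R _ (fun x => / K^2 * (sinh (xi*(b-x)) * sinh (xi*(b-x))))) by (intros; field; lra).
    rewrite RInt_scal_l by auto. rewrite int_qq by auto. fold y K c. rewrite Hh. field. split; lra. }
  assert (EVU : @eq R (RInt (fun x => sinh (xi*(b-x)) / K * (sinh (xi*(x-a)) / K)) a b) ((y * c - K) / (2 * xi * K^2))).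
  { rewrite (RInt_ext_R _ (fun x => / K^2 * (sinh (xi*(b-x)) * sinh (xi*(x-a))))) by (intros; field; lra).
    rewrite RInt_scal_l by auto. rewrite int_pq by auto. fold y K c. rewrite Hh. field. split; lra. }
  assert (EU : @eq R (RInt (fun x => sinh (xi*(x-a)) / K) a b) ((2 * K * (c - 1)) / (2 * xi * K^2))).
  { rewrite (RInt_ext_R _ (fun x => / K * (sinh (xi*(x-a))))) by (intros; field; lra).
    rewrite RInt_scal_l by auto. rewrite int_p by auto. fold y K c. field. split; lra. }
  assert (EV : @eq R (RInt (fun x => sinh (xi*(b-x)) / K) a b) ((2 * K * (c - 1)) / (2 * xi * K^2))).
  { rewrite (RInt_ext_R _ (fun x => / K * (sinh (xi*(b-x))))) by (intros; field; lra).
    rewrite RInt_scal_l by auto. rewrite int_q by auto. fold y K c. field. split; lra. }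
  assert (HD : 0 < 2 * xi * K^2) by (apply Rmult_lt_0_compat; [lra|]; apply pow_lt; lra).
  unfold good. fold y K.
  rewrite EUU, EVV, EVU, EU, EV.
  repeat split.
  - apply Rdiv_le_0_compat; [apply sinh_nonneg; nra | lra].
  - apply Rdiv_le_0_compat; [apply sinh_nonneg; nra | lra].
  - destruct H as [H1 H2].
    assert (Hp : 0 <= xi*(x-a)) by nra. assert (Hq : 0 <= xi*(b-x)) by nra.
    assert (Hs : xi*(x-a) + xi*(b-x) = y) by (unfold y; ring).
    assert (K = sinh (xi*(x-a)) * cosh (xi*(b-x)) + cosh (xi*(x-a)) * sinh (xi*(b-x)))
      by (unfold K; rewrite <- Hs; apply sinh_add).
    pose proof (cosh_ge1 _ Hp). pose proof (cosh_ge1 _ Hq).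
    pose proof (sinh_nonneg _ Hp). pose proof (sinh_nonneg _ Hq).
    replace (sinh (xi * (x - a)) / K + sinh (xi * (b - x)) / K) with ((sinh (xi * (x - a)) + sinh (xi * (b - x))) / K) by (field; lra).
    apply Rle_div_l; [lra|]. nra.
  - replace (a - a) with 0 by ring. rewrite Rmult_0_r, sinh_0. unfold Rdiv; ring.
  - field; lra.
  - field; lra.
  - replace (b - b) with 0 by ring. rewrite Rmult_0_r, sinh_0. unfold Rdiv; ring.
  - intros x. apply cont_of_der. intros; unfold sinh; auto_derive; auto.
  - intros x. apply cont_of_der. intros; unfold sinh; auto_derive; auto.
  - apply Rdiv_lt_0_compat; auto. nra.
  - apply Rdiv_lt_0_compat; auto. nra.
  - apply Rdiv_le_0_compat; auto. nra.
  - replace (2 * ((y * c - K) / (2 * xi * K ^ 2))) with ((2 * (y * c - K)) / (2 * xi * K ^ 2)) by (field; lra).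
    apply div_le; auto. lra.
  - replace (2 * ((y * c - K) / (2 * xi * K ^ 2))) with ((2 * (y * c - K)) / (2 * xi * K ^ 2)) by (field; lra).
    apply div_le; auto. lra.
  - replace (2 * ((K * c - y) / (2 * xi * K ^ 2))) with ((2 * (K * c - y)) / (2 * xi * K ^ 2)) by (field; lra).
    apply div_le; auto. nra.
  - replace (2 * ((K * c - y) / (2 * xi * K ^ 2))) with ((2 * (K * c - y)) / (2 * xi * K ^ 2)) by (field; lra).
    apply div_le; auto. nra.
Qed.

Lemma good_zero a b : a < b -> good (fun x => (x - a) / (b - a)) (fun x => (x - b) / (a - b)) a b.
Proof.
  intros Hab.
  assert (Hder : forall g : R -> R, (forall x, ex_derive g x) -> forall x, continuous g x)
    by (intros; apply cont_of_der; auto).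
  assert (EUU : @eq R (RInt (fun x => (x - a) / (b - a) * ((x - a) / (b - a))) a b) ((b - a) / 3)).
  { rewrite (RInt_anti (fun x => (x - a)^3 / (3 * (b - a)^2))).
    - field. lra.
    - intros x. auto_derive. nz. field. lra.
    - intros x. auto_derive. lra. }
  assert (EVV : @eq R (RInt (fun x => (x - b) / (a - b) * ((x - b) / (a - b))) a b) ((b - a) / 3)).
  { rewrite (RInt_anti (fun x => (x - b)^3 / (3 * (b - a)^2))).
    - field. lra.
    - intros x. auto_derive. nz. field. lra.
    - intros x. auto_derive. lra. }
  assert (EVU : @eq R (RInt (fun x => (x - b) / (a - b) * ((x - a) / (b - a))) a b) ((b - a) / 6)).
  { rewrite (RInt_anti (fun x => - (x^3/3 - (a+b)*x^2/2 + a*b*x) / (b - a)^2)).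
    - field. lra.
    - intros x. auto_derive. nz. field. lra.
    - intros x. auto_derive. lra. }
  assert (EU : @eq R (RInt (fun x => (x - a) / (b - a)) a b) ((b - a) / 2)).
  { rewrite (RInt_anti (fun x => (x - a)^2 / (2 * (b - a)))).
    - field. lra.
    - intros x. auto_derive. nz. field. lra.
    - intros x. auto_derive. lra. }
  assert (EV : @eq R (RInt (fun x => (x - b) / (a - b)) a b) ((b - a) / 2)).
  { rewrite (RInt_anti (fun x => (x - b)^2 / (2 * (a - b)))).
    - field. lra.
    - intros x. auto_derive. nz. field. lra.
    - intros x. auto_derive. lra. }
  unfold good. rewrite EUU, EVV, EVU, EU, EV.
  repeat split; try lra.
  - apply Rdiv_le_0_compat; lra.
  - replace ((x - b) / (a - b)) with ((b - x) / (b - a)) by (field; lra). apply Rdiv_le_0_compat; lra.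
  - replace ((x - a) / (b - a) + (x - b) / (a - b)) with 1 by (field; lra). lra.
  all: try (field; lra).
  all: try (unfold Rdiv; rewrite Rminus_diag; ring).
  all: intros; apply Hder; intros; auto_derive; lra.
Qed.

Lemma good_interval xi a b : a < b -> good (Uf xi a b) (Vf xi a b) a b.
Proof.
  intros Hab. unfold Uf, Vf. rewrite (Phi_abs xi).
  assert (Hx := Rabs_pos xi). set (z := Rabs xi) in *. clearbody z.
  destruct (Req_dec z 0) as [->|Hz].
  - assert (E : forall w, Phi 0 w = w). { intros; unfold Phi; destruct (Req_EM_T 0 0); lra. }
    replace (fun x => Phi 0 (x - a) / Phi 0 (b - a)) with (fun x => (x - a) / (b - a))
      by (apply functional_extensionality; intros; rewrite !E; auto).
    replace (fun x => Phi 0 (x - b) / Phi 0 (a - b)) with (fun x => (x - b) / (a - b))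
      by (apply functional_extensionality; intros; rewrite !E; auto).
    apply good_zero; auto.
  - assert (E : forall w, Phi z w = sinh (z * w) / z).
    { intros; unfold Phi; destruct (Req_EM_T z 0); lra. }
    assert (Hpos : 0 < sinh (z * (b - a))).
    { assert (0 < z * (b - a)) by (apply Rmult_lt_0_compat; lra).
      pose proof (sinh_ge_id (z*(b-a))). lra. }
    replace (fun x => Phi z (x - a) / Phi z (b - a)) with (fun x => sinh (z*(x - a)) / sinh (z*(b - a))).
    2:{ apply functional_extensionality; intros; rewrite !E. field; lra. }
    replace (fun x => Phi z (x - b) / Phi z (a - b)) with (fun x => sinh (z*(b - x)) / sinh (z*(b - a))).
    2:{ apply functional_extensionality; intros; rewrite !E.
        replace (z * (x - b)) with (- (z * (b - x))) by ring.
        replace (z * (a - b)) with (- (z * (b - a))) by ring. rewrite !sinh_opp. field; lra. }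
    apply good_pos; lra.
Qed.

Section Tri.
Variables (N : nat) (l d r bb : nat -> R).
Hypothesis Hpos : forall j, (1 <= j <= N)%nat -> 0 < d j /\ 0 <= l j /\ 0 <= r j /\ 2 * (l j + r j) <= d j.
Hypothesis Hl1 : l 1 = 0.

Fixpoint wz (k : nat) : R * R :=
  match k with
  | O => (1, 0)
  | S k' => (d (S k') - l (S k') * r k' / fst (wz k'), bb (S k') - l (S k') * snd (wz k') / fst (wz k'))
  end.
Definition w k := fst (wz k).
Definition z k := snd (wz k).

Fixpoint back (m : nat) : R :=
  match m with
  | O => 0
  | S m' => (z (N - m') - r (N - m') * back m') / w (N - m')
  end.
Definition sol j := back (N + 1 - j).

Lemma w_inv j : (1 <= j <= N)%nat -> d j - l j <= w j.
Proof.
  induction j as [|j IH]; intros Hj. lia.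
  unfold w; simpl. fold (w j).
  destruct (Nat.eq_dec j 0) as [->|Hj0].
  - rewrite Hl1. unfold w; simpl. destruct (Hpos 1) as (H1&H2&H3&H4); try lia. rewrite Hl1 in *. lra.
  - assert (Hw := IH ltac:(lia)).
    destruct (Hpos j) as (H1&H2&H3&H4); try lia.
    destruct (Hpos (S j)) as (G1&G2&G3&G4); try lia.
    assert (0 < w j) by lra.
    assert (r j / w j <= 1). { apply Rle_div_l; lra. }
    assert (0 <= r j / w j) by (apply Rdiv_le_0_compat; lra).
    assert (l (S j) * (r j / w j) <= l (S j)) by nra.
    unfold Rdiv in *. lra.
Qed.

Lemma w_pos j : (1 <= j <= N)%nat -> 0 < w j.
Proof. intros. pose proof (w_inv j H). destruct (Hpos j) as (?&?&?&?); auto. lra. Qed.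

Lemma sol_rel j : (j <= N)%nat -> sol j = (z j - r j * sol (S j)) / w j.
Proof.
  intros Hj. unfold sol. replace (N + 1 - j)%nat with (S (N - j)) by lia. simpl.
  replace (N - (N - j))%nat with j by lia. replace (N + 1 - S j)%nat with (N - j)%nat by lia. reflexivity.
Qed.

Lemma tri_solve j : (1 <= j <= N)%nat -> l j * sol (j - 1) + d j * sol j + r j * sol (S j) = bb j.
Proof.
  intros Hj.
  assert (Hwj := w_pos j Hj).
  rewrite (sol_rel j) by lia.
  destruct (Nat.eq_dec j 1) as [->|Hj1].
  - rewrite Hl1. unfold w, z; simpl. rewrite Hl1. field.
    unfold w in Hwj; simpl in Hwj; rewrite Hl1 in Hwj. lra.
  - assert (Hw1 := w_pos (j - 1) ltac:(lia)).
    rewrite (sol_rel (j - 1)) by lia. replace (S (j - 1)) with j by lia.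
    rewrite (sol_rel j) by lia.
    assert (Ew : w j = d j - l j * r (j - 1) / w (j - 1)).
    { unfold w at 1. replace j with (S (j - 1)) at 1 by lia. simpl. replace (S (j - 1)) with j by lia. reflexivity. }
    assert (Ez : z j = bb j - l j * z (j - 1) / w (j - 1)).
    { unfold z at 1. replace j with (S (j - 1)) at 1 by lia. simpl. replace (S (j - 1)) with j by lia. reflexivity. }
    rewrite Ez. rewrite Ew. rewrite Ew in Hwj.
    assert (E2: d j * w (j-1) - l j * r (j-1) = (d j - l j * r (j-1) / w (j-1)) * w (j-1)) by (field; lra).
    assert (0 < (d j - l j * r (j-1) / w (j-1)) * w (j-1)) by (apply Rmult_lt_0_compat; lra).
    field. split; lra.
Qed.

End Tri.

Section Hats.
Variables (n : nat) (t xi : nat -> R).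
Hypothesis hn : (3 <= n)%nat.
Hypothesis ht : forall i : nat, (1 <= i)%nat -> (i < n)%nat -> t i < t (S i).

Lemma tmono i k : (1 <= i)%nat -> (i < k)%nat -> (k <= n)%nat -> t i < t k.
Proof.
  intros Hi. induction k as [|k IH]; intros Hk Hkn. lia.
  destruct (Nat.eq_dec i k) as [->|Hne]. apply ht; lia.
  assert (t i < t k) by (apply IH; lia). assert (t k < t (S k)) by (apply ht; lia). lra.
Qed.

Lemma tmono_le i k : (1 <= i)%nat -> (i <= k)%nat -> (k <= n)%nat -> t i <= t k.
Proof.
  intros. destruct (Nat.eq_dec i k) as [->|]. lra. apply Rlt_le, tmono; lia.
Qed.

Definition U k := Uf (xi k) (t k) (t (S k)).
Definition V k := Vf (xi k) (t k) (t (S k)).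

Lemma goodk k : (1 <= k)%nat -> (k < n)%nat -> good (U k) (V k) (t k) (t (S k)).
Proof. intros. apply good_interval. apply ht; lia. Qed.

Ltac dconds := repeat match goal with
  | |- context [Rle_dec ?a ?b] => destruct (Rle_dec a b)
  | |- context [Nat.leb ?a ?b] => destruct (Nat.leb_spec a b)
  end; simpl.

Lemma hat_on k i x : (1 <= k)%nat -> (k < n)%nat -> t k <= x <= t (S k) ->
  (1 <= i <= n)%nat ->
  hat n t xi i x = if Nat.eqb i k then V k x else if Nat.eqb i (S k) then U k x else 0.
Proof.
  intros Hk1 Hkn Hx Hi.
  destruct (Nat.lt_total i k) as [Hlt|[Heq|Hgt]].
  { replace (Nat.eqb i k) with false by (symmetry; apply Nat.eqb_neq; lia).
    replace (Nat.eqb i (S k)) with false by (symmetry; apply Nat.eqb_neq; lia).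
    assert (Hik : t i < t k) by (apply tmono; lia).
    unfold hat; dconds; try lra; try lia;
    (destruct (Nat.eq_dec (S i) k) as [Hs|Hs];
      [ subst k; assert (x = t (S i)) by lra; subst x;
        destruct (goodk i) as (_&_&_&_&HV&_); try lia; exact HV
      | assert (t (S i) < t k) by (apply tmono; lia); lra ]). }
  { subst i. rewrite Nat.eqb_refl.
    unfold hat; dconds; try lra; try lia; try reflexivity.
    all: assert (x = t k) by lra; subst x;
      destruct (goodk (k - 1)) as (_&_&HU&_&_); try lia;
      destruct (goodk k) as (_&_&_&HV&_); try lia;
      unfold U, V in *; replace (S (k - 1)) with k in HU by lia;
      unfold Uf, Vf in *; rewrite HU, HV; reflexivity. }
  { replace (Nat.eqb i k) with false by (symmetry; apply Nat.eqb_neq; lia).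
    destruct (Nat.eq_dec i (S k)) as [->|Hne].
    { rewrite Nat.eqb_refl. unfold hat. replace (S k - 1)%nat with k by lia. dconds; try lra; try lia; try reflexivity.
      all: assert (t (S k) < t (S (S k))) by (apply ht; lia); lra. }
    replace (Nat.eqb i (S k)) with false by (symmetry; apply Nat.eqb_neq; lia).
    assert (Hik : t (S k) < t i) by (apply tmono; lia).
    unfold hat; dconds; try lra; try lia.
    all: destruct (Nat.eq_dec (i - 1) (S k)) as [Hs|Hs];
        [ rewrite Hs in *; assert (x = t (S k)) by lra; subst x;
           destruct (goodk (S k)) as (_&HU&_); try lia;
           unfold U, Uf in HU; replace i with (S (S k)) by lia; exact HU
        | assert (t (S k) < t (i - 1)) by (apply tmono; lia); lra]. }
Qed.

Lemma hat_zero_left j x : (2 <= j <= n)%nat -> x < t (j - 1) -> hat n t xi j x = 0.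
Proof.
  intros Hj Hx. assert (t (j - 1) < t j) by (apply tmono; lia).
  unfold hat; dconds; try lra; try lia; reflexivity.
Qed.

Lemma hat_zero_right j x : (1 <= j < n)%nat -> t (S j) < x -> hat n t xi j x = 0.
Proof.
  intros Hj Hx. assert (t j < t (S j)) by (apply ht; lia).
  unfold hat; dconds; try lra; try lia; reflexivity.
Qed.

Lemma sum_two (G : nat -> R) k N : (1 <= k)%nat ->
  (forall i, i <> k -> i <> S k -> G i = 0) ->
  @eq R (sum_n_m G 1 N) ((if Nat.leb k N then G k else 0) + (if Nat.leb (S k) N then G (S k) else 0)).
Proof.
  intros Hk HG. induction N as [|N IH].
  - rewrite sum_n_m_zero by lia. simpl.
    destruct (Nat.leb_spec k 0); try lia. unfold zero; simpl; ring.
  - destruct N as [|N].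
    + rewrite sum_n_n. destruct (Nat.leb_spec k 1); destruct (Nat.leb_spec (S k) 1); try lia.
      replace k with 1%nat by lia. ring.
      rewrite HG by lia. ring.
    + rewrite sum_n_Sm by lia. rewrite IH.
      destruct (Nat.eq_dec (S (S N)) k) as [E|E].
      * subst k. destruct (Nat.leb_spec (S (S N)) (S N)); try lia.
        destruct (Nat.leb_spec (S (S N)) (S (S N))); try lia.
        destruct (Nat.leb_spec (S (S (S N))) (S N)); try lia.
        destruct (Nat.leb_spec (S (S (S N))) (S (S N))); try lia. unfold plus; simpl; ring.
      * destruct (Nat.eq_dec (S (S N)) (S k)) as [E2|E2].
        -- assert (k = S N) by lia. subst k.
           destruct (Nat.leb_spec (S N) (S N)); try lia.
           destruct (Nat.leb_spec (S N) (S (S N))); try lia.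
           destruct (Nat.leb_spec (S (S N)) (S N)); try lia.
           destruct (Nat.leb_spec (S (S N)) (S (S N))); try lia. unfold plus; simpl; ring.
        -- rewrite (HG (S (S N))) by auto.
           destruct (Nat.leb_spec k (S N)); destruct (Nat.leb_spec k (S (S N))); try lia;
           destruct (Nat.leb_spec (S k) (S N)); destruct (Nat.leb_spec (S k) (S (S N))); try lia; unfold plus; simpl; ring.
Qed.

Lemma sum_hat (a : nat -> R) k x : (1 <= k)%nat -> (k < n)%nat -> t k <= x <= t (S k) ->
  @eq R (sum_n_m (fun i => a i * hat n t xi i x) 1 n) (a k * V k x + a (S k) * U k x).
Proof.
  intros Hk Hkn Hx.
  rewrite (sum_n_m_ext_loc _ (fun i => if Nat.eqb i k then a k * V k x else if Nat.eqb i (S k) then a (S k) * U k x else 0)).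
  - rewrite (sum_two _ k n) by (auto; intros i H1 H2; destruct (Nat.eqb_spec i k); destruct (Nat.eqb_spec i (S k)); lia || reflexivity).
    rewrite Nat.eqb_refl. destruct (Nat.eqb_spec (S k) k); try lia. rewrite Nat.eqb_refl.
    destruct (Nat.leb_spec k n); destruct (Nat.leb_spec (S k) n); try lia. reflexivity.
  - intros i Hi. rewrite (hat_on k i x) by (auto; lia).
    destruct (Nat.eqb_spec i k); [subst; reflexivity|].
    destruct (Nat.eqb_spec i (S k)); [subst; reflexivity|]. match goal with |- @eq _ ?u ?v => change (@eq R u v) end; ring.
Qed.

Lemma find_interval x : t 1 <= x <= t n -> exists k, (1 <= k)%nat /\ (k < n)%nat /\ t k <= x <= t (S k).
Proof.
  intros Hx.
  assert (forall m, (1 <= m)%nat -> (m < n)%nat -> x <= t (S m) ->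
     exists k, (1 <= k)%nat /\ (k < n)%nat /\ t k <= x <= t (S k)).
  { induction m as [|m IH]; intros H1 H2 H3. lia.
    destruct (Rle_dec x (t (S m))) as [Hl|Hl].
    - destruct (Nat.eq_dec m 0) as [->|Hm].
      + exists 1%nat. repeat split; try lia; lra.
      + apply IH; auto; lia.
    - exists (S m). repeat split; try lia; lra. }
  apply (H (n - 1)%nat); try lia. replace (S (n - 1)) with n by lia. lra.
Qed.

Lemma max_index (a : nat -> R) : exists j, (1 <= j <= n)%nat /\ forall k, (1 <= k <= n)%nat -> Rabs (a k) <= Rabs (a j).
Proof.
  assert (forall N, (1 <= N)%nat -> exists j, (1 <= j <= N)%nat /\ forall k, (1 <= k <= N)%nat -> Rabs (a k) <= Rabs (a j)).
  { induction N as [|N IH]; intros HN. lia.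
    destruct (Nat.eq_dec N 0) as [->|HN0].
    - exists 1%nat. split. lia. intros k Hk. replace k with 1%nat by lia. lra.
    - destruct IH as [j [Hj Hmax]]. lia.
      destruct (Rle_dec (Rabs (a (S N))) (Rabs (a j))).
      + exists j. split. lia. intros k Hk. destruct (Nat.eq_dec k (S N)) as [->|]; auto. apply Hmax; lia.
      + exists (S N). split. lia. intros k Hk. destruct (Nat.eq_dec k (S N)) as [->|]. lra.
        assert (Rabs (a k) <= Rabs (a j)) by (apply Hmax; lia). lra. }
  apply H; lia.
Qed.

Lemma piece_ext (F H : R -> R) a b : a <= b -> ex_RInt H a b -> (forall x, a < x < b -> F x = H x) ->
  ex_RInt F a b /\ @eq R (RInt F a b) (RInt H a b).
Proof.
  intros Hab HH HE. split.
  - apply (ex_RInt_ext H). rewrite Rmin_left, Rmax_right by lra. intros; symmetry; apply HE; auto. auto.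
  - apply RInt_ext. rewrite Rmin_left, Rmax_right by lra. auto.
Qed.

Lemma cont_mult (f g : R -> R) : (forall x, continuous f x) -> (forall x, continuous g x) ->
  forall x, continuous (fun y => f y * g y) x.
Proof. intros Hf Hg x. apply (continuous_mult f g); auto. Qed.

Lemma ex_cont (f : R -> R) a b : (forall x, continuous f x) -> ex_RInt f a b.
Proof. intros; apply (ex_RInt_continuous (V:=R_CompleteNormedModule)); auto. Qed.

Lemma split_int j (G GL GR : R -> R) : (1 <= j <= n)%nat ->
  ((2 <= j)%nat -> forall x, continuous GL x) -> ((j < n)%nat -> forall x, continuous GR x) ->
  ((2 <= j)%nat -> forall x, t (j-1) < x < t j -> G x = GL x) ->
  ((j < n)%nat -> forall x, t j < x < t (S j) -> G x = GR x) ->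
  @eq R (RInt (fun x => G x * hat n t xi j x) (t 1) (t n))
   ((if Nat.leb 2 j then RInt (fun x => GL x * U (j-1) x) (t (j-1)) (t j) else 0)
    + (if Nat.ltb j n then RInt (fun x => GR x * V j x) (t j) (t (S j)) else 0)).
Proof.
  intros Hj CL CR HL HR.
  set (F := fun x => G x * hat n t xi j x).
  assert (Left : ex_RInt F (t 1) (t j) /\
     @eq R (RInt F (t 1) (t j)) (if Nat.leb 2 j then RInt (fun x => GL x * U (j-1) x) (t (j-1)) (t j) else 0)).
  { destruct (Nat.leb_spec 2 j).
    - assert (Z : ex_RInt F (t 1) (t (j-1)) /\ @eq R (RInt F (t 1) (t (j-1))) (RInt (fun _ => 0) (t 1) (t (j-1)))).
      { apply piece_ext. apply tmono_le; lia. apply ex_RInt_const.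
        intros x Hx. unfold F. rewrite hat_zero_left by (try lia; lra). ring. }
      assert (M : ex_RInt F (t (j-1)) (t j) /\ @eq R (RInt F (t (j-1)) (t j)) (RInt (fun x => GL x * U (j-1) x) (t (j-1)) (t j))).
      { destruct (goodk (j-1)) as (_&_&_&_&_&CU&_); try lia.
        apply piece_ext. apply Rlt_le, tmono; lia. apply ex_cont, cont_mult; auto; apply CL; lia.
        intros x Hx. unfold F. rewrite HL by (auto; lia).
        rewrite (hat_on (j-1) j x) by (try lia; replace (S (j-1)) with j by lia; split; lra).
        destruct (Nat.eqb_spec j (j-1)); try lia. destruct (Nat.eqb_spec j (S (j-1))); try lia. reflexivity. }
      destruct Z as [Z1 Z2]. destruct M as [M1 M2]. split.
      + apply (ex_RInt_Chasles _ _ (t (j-1))); auto.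
      + rewrite <- (RInt_Chasles _ _ (t (j-1))) by auto. rewrite Z2, M2, RInt_const.
        unfold plus, scal; simpl. unfold mult; simpl. ring.
    - replace j with 1%nat by lia. split. apply ex_RInt_point. rewrite RInt_point. reflexivity. }
  assert (Right : ex_RInt F (t j) (t n) /\
     @eq R (RInt F (t j) (t n)) (if Nat.ltb j n then RInt (fun x => GR x * V j x) (t j) (t (S j)) else 0)).
  { destruct (Nat.ltb_spec j n).
    - assert (Z : ex_RInt F (t (S j)) (t n) /\ @eq R (RInt F (t (S j)) (t n)) (RInt (fun _ => 0) (t (S j)) (t n))).
      { apply piece_ext. apply tmono_le; lia. apply ex_RInt_const.
        intros x Hx. unfold F. rewrite hat_zero_right by (try lia; lra). ring. }
      assert (M : ex_RInt F (t j) (t (S j)) /\ @eq R (RInt F (t j) (t (S j))) (RInt (fun x => GR x * V j x) (t j) (t (S j)))).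
      { destruct (goodk j) as (_&_&_&_&_&_&CV&_); try lia.
        apply piece_ext. apply Rlt_le, ht; lia. apply ex_cont, cont_mult; auto; apply CR; lia.
        intros x Hx. unfold F. rewrite HR by (auto; lia).
        rewrite (hat_on j j x) by (try lia; split; lra).
        rewrite Nat.eqb_refl. reflexivity. }
      destruct Z as [Z1 Z2]. destruct M as [M1 M2]. split.
      + apply (ex_RInt_Chasles _ _ (t (S j))); auto.
      + rewrite <- (RInt_Chasles _ _ (t (S j))) by auto. rewrite Z2, M2, RInt_const.
        unfold plus, scal; simpl. unfold mult; simpl. ring.
    - replace j with n by lia. split. apply ex_RInt_point. rewrite RInt_point. reflexivity. }
  destruct Left as [L1 L2]. destruct Right as [R1 R2].
  rewrite <- (RInt_Chasles _ _ (t j)) by auto. rewrite L2, R2. reflexivity.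
Qed.

Definition AU k := RInt (fun x => U k x * U k x) (t k) (t (S k)).
Definition AV k := RInt (fun x => V k x * V k x) (t k) (t (S k)).
Definition BB k := RInt (fun x => V k x * U k x) (t k) (t (S k)).
Definition dd j := (if Nat.leb 2 j then AU (j-1) else 0) + (if Nat.ltb j n then AV j else 0).
Definition ll j := if Nat.leb 2 j then BB (j-1) else 0.
Definition rr j := if Nat.ltb j n then BB j else 0.

Lemma coef_props j : (1 <= j <= n)%nat -> 0 < dd j /\ 0 <= ll j /\ 0 <= rr j /\ 2 * (ll j + rr j) <= dd j.
Proof.
  intros Hj. unfold dd, ll, rr.
  destruct (Nat.leb_spec 2 j); destruct (Nat.ltb_spec j n).
  - destruct (goodk (j-1)) as (_&_&_&_&_&_&_&P1&P2&P3&P4&P5&_); try lia.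
    destruct (goodk j) as (_&_&_&_&_&_&_&Q1&Q2&Q3&Q4&Q5&_); try lia.
    unfold AU, AV, BB. lra.
  - destruct (goodk (j-1)) as (_&_&_&_&_&_&_&P1&P2&P3&P4&P5&_); try lia.
    unfold AU, AV, BB. lra.
  - destruct (goodk j) as (_&_&_&_&_&_&_&Q1&Q2&Q3&Q4&Q5&_); try lia.
    unfold AU, AV, BB. lra.
  - lia.
Qed.

Lemma RInt_zero_mul (h : R -> R) a b : @eq R (RInt (fun x => 0 * h x) a b) 0.
Proof.
  rewrite (RInt_ext_R _ (fun _ => 0)) by (intros; ring).
  rewrite RInt_const. unfold scal; simpl. unfold mult; simpl. ring.
Qed.

Lemma gram_jj j : (1 <= j <= n)%nat -> gram n t xi j j = dd j.
Proof.
  intros Hj. unfold gram.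
  rewrite (split_int j (hat n t xi j) (U (j-1)) (V j)); try lia.
  - unfold dd, AU, AV. destruct (Nat.leb_spec 2 j); auto.
    replace (S (j - 1)) with j by lia. reflexivity.
  - intros; destruct (goodk (j-1)) as (_&_&_&_&_&C&_); auto; lia.
  - intros; destruct (goodk j) as (_&_&_&_&_&_&C&_); auto; lia.
  - intros H x Hx. rewrite (hat_on (j-1) j x) by (try lia; replace (S (j-1)) with j by lia; split; lra).
    destruct (Nat.eqb_spec j (j-1)); try lia. destruct (Nat.eqb_spec j (S (j-1))); try lia. reflexivity.
  - intros H x Hx. rewrite (hat_on j j x) by (try lia; split; lra).
    rewrite Nat.eqb_refl. reflexivity.
Qed.

Lemma gram_prev j : (2 <= j <= n)%nat -> gram n t xi (j-1) j = ll j.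
Proof.
  intros Hj. unfold gram.
  rewrite (split_int j (hat n t xi (j-1)) (V (j-1)) (fun _ => 0)); try lia.
  - unfold ll, BB. destruct (Nat.leb_spec 2 j); try lia.
    replace (S (j - 1)) with j by lia. destruct (Nat.ltb_spec j n).
    + rewrite RInt_zero_mul. ring.
    + ring.
  - intros; destruct (goodk (j-1)) as (_&_&_&_&_&_&C&_); auto; lia.
  - intros. apply continuous_const.
  - intros H x Hx. rewrite (hat_on (j-1) (j-1) x) by (try lia; replace (S (j-1)) with j by lia; split; lra).
    rewrite Nat.eqb_refl. reflexivity.
  - intros H x Hx. rewrite (hat_on j (j-1) x) by (try lia; split; lra).
    destruct (Nat.eqb_spec (j-1) j); try lia. destruct (Nat.eqb_spec (j-1) (S j)); try lia. reflexivity.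
Qed.

Lemma gram_next j : (1 <= j < n)%nat -> gram n t xi j (S j) = rr j.
Proof.
  intros Hj. unfold gram.
  rewrite (split_int (S j) (hat n t xi j) (V j) (fun _ => 0)); try lia.
  - unfold rr, BB. destruct (Nat.leb_spec 2 (S j)); try lia.
    replace (S j - 1)%nat with j by lia. destruct (Nat.ltb_spec j n); try lia. destruct (Nat.ltb_spec (S j) n).
    + rewrite RInt_zero_mul. ring.
    + ring.
  - intros; replace (S j - 1)%nat with j by lia. destruct (goodk j) as (_&_&_&_&_&_&C&_); auto; lia.
  - intros. apply continuous_const.
  - intros H x Hx. replace (S j - 1)%nat with j in * by lia. rewrite (hat_on j j x) by (try lia; split; lra).
    rewrite Nat.eqb_refl. reflexivity.
  - intros H x Hx. rewrite (hat_on (S j) j x) by (try lia; split; lra).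
    destruct (Nat.eqb_spec j (S j)); try lia. destruct (Nat.eqb_spec j (S (S j))); try lia. reflexivity.
Qed.

Lemma part1 : row_diag_dominant n (gram n t xi).
Proof.
  exists (1/2). split. lra.
  intros j Hj. rewrite gram_jj by auto.
  destruct (coef_props j Hj) as (H1&H2&H3&H4).
  rewrite (Rabs_pos_eq (dd j)) by lra.
  destruct (Nat.eqb_spec j 1); destruct (Nat.eqb_spec j n); try lia.
  - subst j. rewrite gram_next by lia. rewrite Rabs_pos_eq by lra.
    unfold ll in H4; simpl in H4. lra.
  - subst j. rewrite gram_prev by lia. rewrite Rabs_pos_eq by lra.
    unfold rr in *. destruct (Nat.ltb_spec n n); try lia. lra.
  - rewrite gram_prev by lia. rewrite gram_next by lia. rewrite !Rabs_pos_eq by lra. lra.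
Qed.

Definition clamp x := Rmax (t 1) (Rmin x (t n)).

Lemma t1n : t 1 < t n.
Proof. apply tmono; lia. Qed.

Lemma clamp_in x : t 1 <= clamp x <= t n.
Proof.
  pose proof t1n. unfold clamp, Rmax, Rmin.
  destruct (Rle_dec x (t n)); destruct (Rle_dec (t 1) _); lra.
Qed.

Lemma clamp_id x : t 1 <= x <= t n -> clamp x = x.
Proof.
  intros H. unfold clamp. rewrite Rmin_left by lra. rewrite Rmax_right by lra. reflexivity.
Qed.

Lemma clamp_lip x y : Rabs (clamp x - clamp y) <= Rabs (x - y).
Proof.
  pose proof t1n. unfold clamp, Rmax, Rmin.
  destruct (Rle_dec x (t n)); destruct (Rle_dec y (t n));
  repeat match goal with |- context [Rle_dec ?a ?b] => destruct (Rle_dec a b) end;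
  unfold Rabs; repeat match goal with |- context [Rcase_abs ?a] => destruct (Rcase_abs a) end; lra.
Qed.

Lemma ft_cont (f : R -> R) : cont_on (t 1) (t n) f -> forall x, continuous (fun x => f (clamp x)) x.
Proof.
  intros Hf x.
  unfold continuous.
  apply (filterlim_comp _ _ _ clamp f (locally x) (within (fun y => t 1 <= y <= t n) (locally (clamp x)))).
  - intros P HP. unfold within in HP.
    assert (Hc : filterlim clamp (locally x) (locally (clamp x))).
    { apply filterlim_locally. intros eps. exists eps. intros y Hy.
      unfold ball in *; simpl in *; unfold AbsRing_ball in *; simpl in *.
      unfold abs, minus, plus, opp in *; simpl in *.
      pose proof (clamp_lip y x). unfold Rminus in H. lra. }
    specialize (Hc _ HP). simpl in Hc.
    unfold filtermap in *. eapply filter_imp; [|exact Hc]. simpl. intros y Hy. apply Hy. apply clamp_in.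
  - apply Hf. apply clamp_in.
Qed.

Lemma cont_lin (p q r : R -> R) al be : (forall x, continuous p x) -> (forall x, continuous q x) -> (forall x, continuous r x) ->
  forall x, continuous (fun x => p x - (al * q x + be * r x)) x.
Proof.
  intros Hp Hq Hr x.
  apply (continuous_minus p (fun x => al * q x + be * r x)); auto.
  apply (continuous_plus (fun x => al * q x) (fun x => be * r x)).
  apply (cont_mult (fun _ => al) q); auto. intros; apply continuous_const.
  apply (cont_mult (fun _ => be) r); auto. intros; apply continuous_const.
Qed.

Lemma RInt_minus_R (f g : R -> R) a b : ex_RInt f a b -> ex_RInt g a b ->
  @eq R (RInt (fun x => f x - g x) a b) (RInt f a b - RInt g a b).
Proof. intros. exact (RInt_minus f g a b H H0). Qed.
Lemma RInt_plus_R (f g : R -> R) a b : ex_RInt f a b -> ex_RInt g a b ->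
  @eq R (RInt (fun x => f x + g x) a b) (RInt f a b + RInt g a b).
Proof. intros. exact (RInt_plus f g a b H H0). Qed.
Lemma ex_plus_R (f g : R -> R) a b : ex_RInt f a b -> ex_RInt g a b -> ex_RInt (fun x => f x + g x) a b.
Proof. intros. exact (ex_RInt_plus f g a b H H0). Qed.
Lemma ex_scal_R (f : R -> R) c a b : ex_RInt f a b -> ex_RInt (fun x => c * f x) a b.
Proof. intros. exact (ex_RInt_scal f a b c H). Qed.
Lemma RInt_scal_R (f : R -> R) c a b : ex_RInt f a b -> @eq R (RInt (fun x => c * f x) a b) (c * RInt f a b).
Proof. intros. exact (RInt_scal f a b c H). Qed.

Lemma lin3 (p q r s : R -> R) al be a b : (forall x, continuous p x) -> (forall x, continuous q x) ->
  (forall x, continuous r x) -> (forall x, continuous s x) ->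
  @eq R (RInt (fun x => (p x - (al * q x + be * r x)) * s x) a b)
   (RInt (fun x => p x * s x) a b - al * RInt (fun x => q x * s x) a b - be * RInt (fun x => r x * s x) a b).
Proof.
  intros Hp Hq Hr Hs.
  assert (E1 := ex_cont _ a b (cont_mult p s Hp Hs)).
  assert (E2 := ex_cont _ a b (cont_mult q s Hq Hs)).
  assert (E3 := ex_cont _ a b (cont_mult r s Hr Hs)).
  rewrite (RInt_ext_R _ (fun x => (p x * s x) - ((al * (q x * s x)) + (be * (r x * s x))))) by (intros; ring).
  rewrite RInt_minus_R; auto.
  2:{ apply ex_plus_R; apply ex_scal_R; auto. }
  rewrite RInt_plus_R by (apply ex_scal_R; auto).
  rewrite !RInt_scal_R by auto. ring.
Qed.

Definition bbv (f : R -> R) j :=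
  (if Nat.leb 2 j then RInt (fun x => f (clamp x) * U (j-1) x) (t (j-1)) (t j) else 0)
  + (if Nat.ltb j n then RInt (fun x => f (clamp x) * V j x) (t j) (t (S j)) else 0).

Lemma row_eq (f : R -> R) (a : nat -> R) j : cont_on (t 1) (t n) f -> (1 <= j <= n)%nat ->
  @eq R (RInt (fun x => (f x - sum_n_m (fun i => a i * hat n t xi i x) 1 n) * hat n t xi j x) (t 1) (t n))
   (bbv f j - (ll j * a (j-1)%nat + dd j * a j + rr j * a (S j))).
Proof.
  intros Hf Hj.
  assert (Cf := ft_cont f Hf).
  rewrite (split_int j _ (fun x => f (clamp x) - (a (j-1)%nat * V (j-1)%nat x + a j * U (j-1) x))
                         (fun x => f (clamp x) - (a j * V j x + a (S j) * U j x))); try lia.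
  - unfold bbv, ll, dd, rr.
    destruct (Nat.leb_spec 2 j); destruct (Nat.ltb_spec j n).
    + destruct (goodk (j-1)) as (_&_&_&_&_&CU&CV&_); try lia.
      destruct (goodk j) as (_&_&_&_&_&CU'&CV'&_); try lia.
      rewrite !lin3 by auto.
      rewrite (RInt_ext_R (fun x => U j x * V j x) (fun x => V j x * U j x)) by (intros; ring).
      unfold AU, AV, BB. replace (S (j - 1)) with j by lia. ring.
    + destruct (goodk (j-1)) as (_&_&_&_&_&CU&CV&_); try lia.
      rewrite !lin3 by auto.
      unfold AU, AV, BB. replace (S (j - 1)) with j by lia. ring.
    + destruct (goodk j) as (_&_&_&_&_&CU'&CV'&_); try lia.
      rewrite !lin3 by auto.
      rewrite (RInt_ext_R (fun x => U j x * V j x) (fun x => V j x * U j x)) by (intros; ring).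
      unfold AU, AV, BB. ring.
    + lia.
  - intros H. destruct (goodk (j-1)) as (_&_&_&_&_&CU&CV&_); try lia. apply cont_lin; auto.
  - intros H. destruct (goodk j) as (_&_&_&_&_&CU&CV&_); try lia. apply cont_lin; auto.
  - intros H x Hx.
    assert (t 1 <= t (j-1)) by (apply tmono_le; lia). assert (t j <= t n) by (apply tmono_le; lia).
    rewrite clamp_id by lra.
    rewrite (sum_hat a (j-1) x) by (try lia; replace (S (j-1)) with j by lia; split; lra).
    replace (S (j-1)) with j by lia. reflexivity.
  - intros H x Hx.
    assert (t 1 <= t j) by (apply tmono_le; lia). assert (t (S j) <= t n) by (apply tmono_le; lia).
    rewrite clamp_id by lra.
    rewrite (sum_hat a j x) by (try lia; split; lra). reflexivity.
Qed.

Lemma abs_inv y M : Rabs y <= M -> - M <= y <= M.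
Proof. intros H. pose proof (Rle_abs y). pose proof (Rle_abs (- y)). rewrite Rabs_Ropp in *. lra. Qed.

Lemma piece_bound (f W : R -> R) M c e : c < e -> t 1 <= c -> e <= t n -> cont_on (t 1) (t n) f ->
  (forall x, continuous W x) -> (forall x, c <= x <= e -> 0 <= W x) ->
  (forall x, t 1 <= x <= t n -> Rabs (f x) <= M) ->
  Rabs (RInt (fun x => f (clamp x) * W x) c e) <= M * RInt W c e.
Proof.
  intros Hce H1 H2 Hf CW HW HM.
  assert (Cf := ft_cont f Hf).
  assert (EI := ex_cont _ c e (cont_mult _ _ Cf CW)).
  assert (EW : ex_RInt (fun x => M * W x) c e) by (apply ex_cont, (cont_mult (fun _ => M)); auto; intros; apply continuous_const).
  assert (EW' : ex_RInt (fun x => - M * W x) c e) by (apply ex_cont, (cont_mult (fun _ => - M)); auto; intros; apply continuous_const).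
  apply Rabs_le. split.
  - replace (- (M * RInt W c e)) with (RInt (fun x => - M * W x) c e).
    2:{ rewrite RInt_scal_l by auto. match goal with |- @eq _ ?u ?v => change (@eq R u v) end; ring. }
    apply RInt_le; auto. lra.
    intros x Hx. assert (Hb := HM (clamp x) (clamp_in x)). assert (0 <= W x) by (apply HW; lra).
    apply abs_inv in Hb. nra.
  - replace (M * RInt W c e) with (RInt (fun x => M * W x) c e).
    2:{ rewrite RInt_scal_l by auto. match goal with |- @eq _ ?u ?v => change (@eq R u v) end; ring. }
    apply RInt_le; auto. lra.
    intros x Hx. assert (Hb := HM (clamp x) (clamp_in x)). assert (0 <= W x) by (apply HW; lra).
    apply abs_inv in Hb. nra.
Qed.

Lemma bbv_bound (f : R -> R) M j : (1 <= j <= n)%nat -> cont_on (t 1) (t n) f -> 0 <= M ->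
  (forall x, t 1 <= x <= t n -> Rabs (f x) <= M) -> Rabs (bbv f j) <= 2 * M * dd j.
Proof.
  intros Hj Hf HM0 HM. unfold bbv, dd.
  assert (L : (2 <= j)%nat -> Rabs (RInt (fun x => f (clamp x) * U (j-1) x) (t (j-1)) (t j)) <= 2 * M * AU (j - 1)).
  { intros H. destruct (goodk (j-1)) as (P&_&_&_&_&CU&_&_&_&_&_&_&P7&_); try lia.
    replace (S (j-1)) with j in * by lia.
    eapply Rle_trans. apply piece_bound; auto. apply tmono; lia. apply tmono_le; lia. apply tmono_le; lia.
    intros x Hx; apply P; auto.
    unfold AU. replace (S (j-1)) with j by lia. nra. }
  assert (R0 : (j < n)%nat -> Rabs (RInt (fun x => f (clamp x) * V j x) (t j) (t (S j))) <= 2 * M * AV j).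
  { intros H. destruct (goodk j) as (P&_&_&_&_&_&CV&_&_&_&_&_&_&P8); try lia.
    eapply Rle_trans. apply piece_bound; auto. apply ht; lia. apply tmono_le; lia. apply tmono_le; lia.
    intros x Hx; apply P; auto.
    unfold AV. nra. }
  eapply Rle_trans. apply Rabs_triang.
  destruct (Nat.leb_spec 2 j); destruct (Nat.ltb_spec j n); rewrite ?Rabs_R0.
  - specialize (L H). specialize (R0 H0). lra.
  - specialize (L H). lra.
  - specialize (R0 H0). lra.
  - lra.
Qed.

Lemma row_sys (f : R -> R) (a : nat -> R) g j : cont_on (t 1) (t n) f -> (1 <= j <= n)%nat ->
  (forall x, g x = sum_n_m (fun i => a i * hat n t xi i x) 1 n) ->
  RInt (fun x => (f x - g x) * hat n t xi j x) (t 1) (t n) = 0 ->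
  bbv f j = ll j * a (j-1)%nat + dd j * a j + rr j * a (S j).
Proof.
  intros Hf Hj Ha Ho.
  rewrite (RInt_ext_R _ (fun x => (f x - sum_n_m (fun i => a i * hat n t xi i x) 1 n) * hat n t xi j x)) in Ho
    by (intros; rewrite Ha; reflexivity).
  rewrite row_eq in Ho by auto. lra.
Qed.

Lemma part2 (f : R -> R) : cont_on (t 1) (t n) f ->
        (exists g, is_hat_proj n t xi f g)
        /\ forall g, is_hat_proj n t xi f g ->
             forall M : R, (forall x, t 1%nat <= x <= t n -> Rabs (f x) <= M) ->
               forall x, t 1%nat <= x <= t n -> Rabs (g x) <= 4 * M.
Proof.
  intros Hf. split.
  - set (sl := sol n ll dd rr (bbv f)).
    exists (fun x => sum_n_m (fun i => sl i * hat n t xi i x) 1 n). split.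
    + exists sl. reflexivity.
    + intros i Hi. rewrite row_eq by auto.
      unfold sl. rewrite (tri_solve n ll dd rr (bbv f) coef_props (eq_refl _) i Hi). match goal with |- @eq _ ?u ?v => change (@eq R u v) end; ring.
  - intros g [[a Ha] Ho] M HM x Hx.
    assert (HM0 : 0 <= M). { pose proof t1n. pose proof (HM (t 1) ltac:(lra)). pose proof (Rabs_pos (f (t 1))). lra. }
    destruct (max_index a) as [j [Hj Hmax]].
    set (m := Rabs (a j)).
    assert (Hm : m <= 4 * M).
    { assert (E := row_sys f a g j Hf Hj Ha (Ho j Hj)).
      destruct (coef_props j Hj) as (D1&D2&D3&D4).
      assert (B := bbv_bound f M j Hj Hf HM0 HM).
      assert (Ll : ll j * Rabs (a (j-1)%nat) <= ll j * m).
      { unfold ll in *. destruct (Nat.leb_spec 2 j). apply Rmult_le_compat_l; auto. apply Hmax; lia. lra. }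
      assert (Rr : rr j * Rabs (a (S j)) <= rr j * m).
      { unfold rr in *. destruct (Nat.ltb_spec j n). apply Rmult_le_compat_l; auto. apply Hmax; lia. lra. }
      assert (Hdm : dd j * m <= 2 * M * dd j + ll j * m + rr j * m).
      { unfold m. rewrite <- (Rabs_pos_eq (dd j)) by lra. rewrite <- Rabs_mult.
        replace (dd j * a j) with (bbv f j - ll j * a (j-1)%nat - rr j * a (S j)) by lra.
        eapply Rle_trans. apply Rabs_triang. eapply Rle_trans. apply Rplus_le_compat_r. apply Rabs_triang.
        rewrite !Rabs_Ropp, !Rabs_mult, (Rabs_pos_eq (ll j)), (Rabs_pos_eq (rr j)) by lra.
        rewrite (Rabs_pos_eq (dd j)) by lra. fold m. lra. }
      assert ((ll j + rr j) * m <= dd j / 2 * m) by (apply Rmult_le_compat_r; [apply Rabs_pos| lra]).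
      assert (dd j * m <= dd j * (4 * M)) by lra.
      apply (Rmult_le_reg_l (dd j)); auto. }
    destruct (find_interval x Hx) as [k [Hk1 [Hk2 Hkx]]].
    rewrite Ha. rewrite (sum_hat a k x) by auto.
    destruct (goodk k) as (P&_); try lia.
    destruct (P x Hkx) as (P1&P2&P3).
    assert (A1 : Rabs (a k) <= m) by (apply Hmax; lia).
    assert (A2 : Rabs (a (S k)) <= m) by (apply Hmax; lia).
    eapply Rle_trans. apply Rabs_triang. rewrite !Rabs_mult, (Rabs_pos_eq (V k x)), (Rabs_pos_eq (U k x)) by lra.
    assert (Rabs (a k) * V k x <= m * V k x) by (apply Rmult_le_compat_r; lra).
    assert (Rabs (a (S k)) * U k x <= m * U k x) by (apply Rmult_le_compat_r; lra).
    assert (0 <= m) by apply Rabs_pos.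
    nra.
Qed.

End Hats.

Theorem mainTheorem16 (n : nat) (t xi : nat -> R)
  (hn : (3 <= n)%nat)
  (ht : forall i : nat, (1 <= i)%nat -> (i < n)%nat -> t i < t (S i)) :
  row_diag_dominant n (gram n t xi)
  /\ (forall f : R -> R, cont_on (t 1%nat) (t n) f ->
        (exists g, is_hat_proj n t xi f g)
        /\ forall g, is_hat_proj n t xi f g ->
             forall M : R, (forall x, t 1%nat <= x <= t n -> Rabs (f x) <= M) ->
               forall x, t 1%nat <= x <= t n -> Rabs (g x) <= 4 * M).
Proof.
  split.
  - apply part1; auto.
  - intros f Hf. apply part2; auto.
Qed.
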